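(* For $\epsilon > 0$ let $f_\epsilon(\theta) = \epsilon + \cos\theta$, viewed as a holomorphic function on the complex cylinder $\mathcal C = \mathbb C / 2\pi\mathbb Z$. For a piecewise-$C^1$ closed curve $\gamma$ in $\mathcal C$ that is homotopic to the real circle $\{\theta : \Im\theta = 0\}$ (traversed once in the direction of increasing $\Re\theta$), define $$Z_\gamma(\epsilon) = \int_\gamma f_\epsilon(\theta)\,\mathrm d\theta,\qquad Z_{Q,\gamma}(\epsilon) = \int_\gamma |f_\epsilon(\theta)|\,|\mathrm d\theta|,\qquad \langle\sigma\rangle_\gamma(\epsilon) = \frac{Z_\gamma(\epsilon)}{Z_{Q,\gamma}(\epsilon)}.$$ Then $Z_\gamma(\epsilon) = 2\pi\epsilon$ for every such $\gamma$, and there is a constant $C$ such that for all sufficiently small $\epsilon>0$ and every such curve $\gamma$, $$\langle\sigma\rangle_\gamma(\epsilon) \le \frac{\pi}{2}\,\epsilon + C\epsilon^2 .$$ In particular no such deformation of the contour achieves an average sign larger than $\frac{\pi}{2}\epsilon + O(\epsilon^2)$, the same order as on the real circle.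
   Context: This models a one-site ''lattice'' with partition function $Z(\epsilon)=\int_0^{2\pi}(\epsilon+\cos\theta)\,\mathrm d\theta$, i.e. Boltzmann factor $e^{-S}$ with $S_\epsilon(\theta) = -\log(\epsilon+\cos\theta)$. The ''average sign'' on an integration contour is the ratio of the partition function (integral of the Boltzmann factor along the contour) to the quenched partition function (integral of the absolute value of the Boltzmann factor with respect to arc length along the contour). Contour deformations are homotopies within the complexified domain of integration, the cylinder $\mathbb C/2\pi\mathbb Z$. *)

(* Defs.v *)
From Stdlib Require Import Reals List.
Import ListNotations.
From Coquelicot Require Import Coquelicot.
Open Scope R_scope.

Definition Cexp (z : C) : C := (exp (Re z) * cos (Im z), exp (Re z) * sin (Im z)).
Definition Ccos (z : C) : C := ((Cexp (Ci * z) + Cexp (- (Ci * z))) / RtoC 2)%C.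

Definition f_eps (eps : R) (z : C) : C := (RtoC eps + Ccos z)%C.

(* The cylinder C / 2 pi Z : a closed curve in the cylinder is represented by
   a lift gamma : [0,1] -> C with gamma 1 - gamma 0 in 2 pi Z (all quantities
   below are invariant under the choice of lift). *)

Definition unit_int (t : R) : Prop := 0 <= t <= 1.

Definition continuous_on_01 (g : R -> C) : Prop :=
  forall t, unit_int t -> filterlim g (within unit_int (locally t)) (locally (g t)).

Fixpoint strictly_increasing (l : list R) : Prop :=
  match l with
  | nil => True
  | a :: l' => match l' with
               | nil => True
               | b :: _ => a < b /\ strictly_increasing l'
               end
  end.

Fixpoint consecutive (l : list R) : list (R * R) :=
  match l with
  | nil => nil
  | a :: l' => match l' with
               | nil => nil
               | b :: _ => (a, b) :: consecutive l'
               end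
  end.

(* gamma restricted to [a,b] is C^1: its derivative on (a,b) extends to a
   function continuous on [a,b] (one-sided derivatives at the ends then exist
   and agree with it, by continuity of gamma on [a,b]). *)
Definition C1_on (g : R -> C) (a b : R) : Prop :=
  exists dg : R -> C,
    (forall t, a < t < b -> is_derive g t (dg t)) /\
    (forall t, a <= t <= b ->
       filterlim dg (within (fun u => a <= u <= b) (locally t)) (locally (dg t))).

Definition piecewise_C1 (g : R -> C) : Prop :=
  continuous_on_01 g /\
  exists l : list R,
    strictly_increasing ((0 :: l ++ 1 :: nil)%list) /\
    forall p, List.In p (consecutive ((0 :: l ++ 1 :: nil)%list)) -> C1_on g (fst p) (snd p).

Definition closed_in_cylinder (g : R -> C) : Prop :=
  exists k : Z, (g 1 - g 0)%C = RtoC (2 * PI * IZR k).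

Definition real_circle (t : R) : C := RtoC (2 * PI * t).

(* free homotopy of closed curves in the cylinder, expressed through a lift of
   the homotopy to C (the square [0,1]^2 is simply connected, so every
   homotopy into the cylinder lifts) *)
Definition homotopic_to_real_circle (g : R -> C) : Prop :=
  exists H : R * R -> C,
    (forall p : R * R, unit_int (fst p) -> unit_int (snd p) ->
       filterlim H (within (fun q : R * R => unit_int (fst q) /\ unit_int (snd q))
                           (locally p)) (locally (H p))) /\
    (forall t, unit_int t -> H (0, t) = g t) /\
    (forall t, unit_int t -> H (1, t) = real_circle t) /\
    (forall s, unit_int s -> closed_in_cylinder (fun t => H (s, t))).

Definition admissible_contour (g : R -> C) : Prop :=
  piecewise_C1 g /\ closed_in_cylinder g /\ homotopic_to_real_circle g.

(* derivative of a curve R -> C, componentwise (where gamma is differentiable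
   this is its derivative; at the finitely many corners the value is irrelevant
   for the Riemann integrals below) *)
Definition Cderive (g : R -> C) (t : R) : C :=
  (Derive (fun u => Re (g u)) t, Derive (fun u => Im (g u)) t).

Definition Z_gamma (eps : R) (g : R -> C) : C :=
  RInt (V := C_R_CompleteNormedModule)
       (fun t => (f_eps eps (g t) * Cderive g t)%C) 0 1.

Definition ZQ_gamma (eps : R) (g : R -> C) : R :=
  RInt (fun t => Cmod (f_eps eps (g t)) * Cmod (Cderive g t)) 0 1.

Definition avg_sign (eps : R) (g : R -> C) : C :=
  (Z_gamma eps g / RtoC (ZQ_gamma eps g))%C.

(* Main.v *)
Require Import Defs.
From Stdlib Require Import Reals Lra Lia List.
From Coquelicot Require Import Coquelicot.
Open Scope R_scope.

Lemma Re_derive (g : R -> C) t (l : C) :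
  is_derive (V := C_R_NormedModule) g t l -> is_derive (fun u => Re (g u)) t (Re l).
Proof.
  intros H.
  unfold is_derive in *.
  apply (filterdiff_comp g (fun z : C_R_NormedModule => fst z) _ (fun z => fst z)) in H.
  - exact H.
  - apply filterdiff_linear. apply (is_linear_fst (K:=R_AbsRing) (U:=R_NormedModule) (V:=R_NormedModule)).
Qed.

Lemma Im_derive (g : R -> C) t (l : C) :
  is_derive (V := C_R_NormedModule) g t l -> is_derive (fun u => Im (g u)) t (Im l).
Proof.
  intros H.
  unfold is_derive in *.
  apply (filterdiff_comp g (fun z : C_R_NormedModule => snd z) _ (fun z => snd z)) in H.
  - exact H.
  - apply filterdiff_linear. apply (is_linear_snd (K:=R_AbsRing) (U:=R_NormedModule) (V:=R_NormedModule)).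
Qed.

Definition ch (y : R) := (exp y + exp (-y)) / 2.
Definition sh (y : R) := (exp y - exp (-y)) / 2.

Lemma Ccos_eq z : Ccos z = (cos (Re z) * ch (Im z), - (sin (Re z) * sh (Im z))).
Proof.
  destruct z as [x y]. unfold Ccos, Cexp, ch, sh, Ci. simpl.
  unfold Cdiv, Cmult, Cplus, Copp, Cinv, RtoC. simpl.
  f_equal.
  - replace (0 * x - 1 * y) with (-y) by ring. replace (0*y+1*x) with x by ring.
    rewrite ?Ropp_involutive, ?cos_neg, sin_neg. field.
  - replace (0 * x - 1 * y) with (-y) by ring. replace (0*y+1*x) with x by ring.
    rewrite ?Ropp_involutive, ?cos_neg, ?sin_neg. field.
Qed.

Lemma cR_mult (f g : R -> R) x : continuous f x -> continuous g x -> continuous (fun t => f t * g t) x.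
Proof. intros; apply (continuous_mult f g); auto. Qed.
Lemma cR_plus (f g : R -> R) x : continuous f x -> continuous g x -> continuous (fun t => f t + g t) x.
Proof. intros; apply (continuous_plus f g); auto. Qed.
Lemma cR_minus (f g : R -> R) x : continuous f x -> continuous g x -> continuous (fun t => f t - g t) x.
Proof. intros; apply (continuous_minus f g); auto. Qed.
Lemma cR_opp (f : R -> R) x : continuous f x -> continuous (fun t => - f t) x.
Proof. intros; apply (continuous_opp f); auto. Qed.
Lemma cR_div2 (f : R -> R) x : continuous f x -> continuous (fun t => f t / 2) x.
Proof. intros; unfold Rdiv. apply cR_mult; auto. apply continuous_const. Qed.
Lemma cR_const (c : R) x : continuous (fun _ : R => c) x.
Proof. apply continuous_const. Qed.

Ltac cont := repeat first [ apply cR_plus | apply cR_minus | apply cR_mult | apply cR_opp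
  | apply cR_div2 | apply continuous_sin_comp | apply continuous_cos_comp
  | apply continuous_exp_comp | apply continuous_sqrt_comp | apply cR_const | assumption ].

Definition clamp (c d t : R) := Rmax c (Rmin d t).

Lemma clamp_in c d t : c <= d -> c <= clamp c d t <= d.
Proof. intros. unfold clamp, Rmax, Rmin. repeat destruct Rle_dec; lra. Qed.

Lemma clamp_id c d t : c <= t <= d -> clamp c d t = t.
Proof. intros. unfold clamp, Rmax, Rmin. repeat destruct Rle_dec; lra. Qed.

Lemma clamp_lip c d t s : c <= d -> Rabs (clamp c d t - clamp c d s) <= Rabs (t - s).
Proof.
  intros. unfold clamp, Rmax, Rmin. repeat destruct Rle_dec;
  unfold Rabs; repeat destruct Rcase_abs; lra.
Qed.

Lemma cont_clamp {U : UniformSpace} (h : R -> U) c d : c <= d ->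
  (forall t, c <= t <= d -> filterlim h (within (fun u => c <= u <= d) (locally t)) (locally (h t))) ->
  forall s, continuous (fun t => h (clamp c d t)) s.
Proof.
  intros Hcd Hh s P HP.
  specialize (Hh (clamp c d s) (clamp_in c d s Hcd) P HP).
  unfold within in Hh. destruct Hh as [e He].
  exists e. intros y Hy. apply He.
  - unfold ball in *; simpl in *; unfold AbsRing_ball, abs, minus, plus, opp in *; simpl in *.
    eapply Rle_lt_trans; [apply clamp_lip; lra| exact Hy].
  - apply clamp_in; auto.
Qed.

Lemma within_mono {U : UniformSpace} (h : R -> U) (A B : R -> Prop) t l :
  (forall x, A x -> B x) -> filterlim h (within B (locally t)) l ->
  filterlim h (within A (locally t)) l.
Proof.
  intros HAB H. eapply filterlim_filter_le_1; [|exact H].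
  intros P HP. unfold within in *. eapply filter_imp; [|exact HP].
  intros x Hx HBx. apply Hx. apply HAB. exact HBx.
Qed.

Lemma ftc (u psi : R -> R) a b : a <= b -> (forall t, continuous u t) -> (forall t, continuous psi t) ->
  (forall t, a < t < b -> is_derive u t (psi t)) -> RInt psi a b = u b - u a.
Proof.
  intros Hab Hu Hp Hd.
  assert (Hex : forall x y, ex_RInt psi x y).
  { intros x y. apply (ex_RInt_continuous (V := R_CompleteNormedModule)). intros; apply Hp. }
  assert (HI : forall x, is_derive (fun s => RInt psi a s) x (psi x)).
  { intros x. apply is_derive_RInt with (a := a).
    - apply filter_forall. intros y. apply RInt_correct. apply Hex.
    - apply Hp. }
  destruct (MVT_gen (fun s => RInt psi a s - u s) a b (fun _ => 0)) as [c [_ Hc]].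
  - intros x Hx. rewrite Rmin_left in Hx by lra. rewrite Rmax_right in Hx by lra.
    assert (H := is_derive_minus _ _ _ _ _ (HI x) (Hd x Hx)).
    replace 0 with (minus (psi x) (psi x)). exact H.
    unfold minus, plus, opp; simpl. ring.
  - intros x _. apply continuity_pt_filterlim.
    apply (continuous_minus (fun s => RInt psi a s) u). 
    + apply ex_derive_continuous. eexists. apply HI.
    + apply Hu.
  - rewrite RInt_point in Hc. unfold zero in Hc; simpl in Hc. lra.
Qed.

Lemma last_default (b : R) l d1 d2 : last (b :: l) d1 = last (b :: l) d2.
Proof.
  revert b. induction l as [|x l IH]; intros b; simpl; auto.
  destruct l; auto. apply (IH x).
Qed.

Lemma si_last (b : R) l : strictly_increasing (b :: l) -> b <= last (b :: l) b.
Proof.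
  revert b. induction l as [|x l IH]; intros b H; [simpl; lra|].
  destruct H as [H1 H2]. specialize (IH x H2).
  change (last (b :: x :: l) b) with (last (x :: l) b).
  rewrite (last_default x l b x). lra.
Qed.

Lemma partition_ind (P : R -> R -> Prop) :
  (forall c, P c c) -> (forall c d e, c <= d -> d <= e -> P c d -> P d e -> P c e) ->
  forall lo hi l a, lo <= a -> last (a :: l) a <= hi -> strictly_increasing (a :: l) ->
  (forall p, In p (consecutive (a :: l)) -> forall c d, fst p <= c -> c <= d -> d <= snd p ->
      lo <= c -> d <= hi -> P c d) ->
  forall c d, a <= c -> c <= d -> d <= last (a :: l) a -> P c d.
Proof.
  intros Hrefl Htr lo hi l. induction l as [|b l IH]; intros a Hlo Hhi Hsi Hp c d Hac Hcd Hdl.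
  - simpl in Hdl. replace d with c by lra. apply Hrefl.
  - destruct Hsi as [Hab Hsi].
    assert (Hlast : last (a :: b :: l) a = last (b :: l) b).
    { change (last (a :: b :: l) a) with (last (b :: l) a). apply last_default. }
    rewrite Hlast in Hdl, Hhi.
    assert (Hbl := si_last b l Hsi).
    assert (Hpiece : forall c d, a <= c -> c <= d -> d <= b -> P c d).
    { intros c' d' H1 H2 H3. apply (Hp (a, b)); simpl; auto; lra. }
    assert (HIH : forall c d, b <= c -> c <= d -> d <= last (b :: l) b -> P c d).
    { apply IH; auto; try lra. intros p Hin. apply Hp. simpl. right. exact Hin. }
    destruct (Rle_lt_dec d b) as [Hdb|Hdb].
    + apply Hpiece; lra.
    + destruct (Rle_lt_dec b c) as [Hbc|Hbc].
      * apply HIH; lra.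
      * apply (Htr c b d); try lra.
        -- apply Hpiece; lra.
        -- apply HIH; lra.
Qed.

Lemma cont_Re (h : R -> C) x : continuous h x -> continuous (fun t => Re (h t)) x.
Proof. intros H. apply (continuous_comp h (fun z : C => fst z)); auto. destruct (h x) as [p q]. apply continuous_fst. Qed.
Lemma cont_Im (h : R -> C) x : continuous h x -> continuous (fun t => Im (h t)) x.
Proof. intros H. apply (continuous_comp h (fun z : C => snd z)); auto. destruct (h x) as [p q]. apply continuous_snd. Qed.

Lemma locally_open_int c d t : c < t < d -> locally t (fun u => c < u < d).
Proof.
  intros H.
  assert (Hp : 0 < Rmin (t - c) (d - t)) by (apply Rmin_pos; lra).
  exists (mkposreal _ Hp). intros u Hu.
  unfold ball in Hu; simpl in Hu; unfold AbsRing_ball, abs, minus, plus, opp in Hu; simpl in Hu.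
  assert (H1 := Rmin_l (t - c) (d - t)). assert (H2 := Rmin_r (t - c) (d - t)).
  unfold Rabs in Hu. destruct Rcase_abs in Hu; lra.
Qed.

Lemma piece_rep g a b c d : continuous_on_01 g -> C1_on g a b -> a <= c -> c < d -> d <= b ->
  0 <= c -> d <= 1 ->
  exists X Y DX DY : R -> R,
  (forall t, continuous X t) /\ (forall t, continuous Y t) /\ (forall t, continuous DX t) /\
  (forall t, continuous DY t) /\
  (forall t, c < t < d -> Re (g t) = X t /\ Im (g t) = Y t /\ Cderive g t = (DX t, DY t) /\
      is_derive X t (DX t) /\ is_derive Y t (DY t)) /\
  X c = Re (g c) /\ X d = Re (g d) /\ Y c = Im (g c) /\ Y d = Im (g d).
Proof.
  intros Hg [dg [Hd Hdc]] H1 H2 H3 H4 H5.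
  assert (Hgc : forall s, continuous (fun t => g (clamp c d t)) s).
  { apply cont_clamp; [lra|]. intros t Ht. eapply within_mono; [|apply Hg].
    - intros x Hx. unfold unit_int. lra.
    - unfold unit_int. lra. }
  assert (Hdgc : forall s, continuous (fun t => dg (clamp c d t)) s).
  { apply cont_clamp; [lra|]. intros t Ht. eapply within_mono; [|apply Hdc].
    - intros x Hx. simpl. lra.
    - lra. }
  exists (fun t => Re (g (clamp c d t))), (fun t => Im (g (clamp c d t))),
         (fun t => Re (dg (clamp c d t))), (fun t => Im (dg (clamp c d t))).
  assert (Hloc : forall t, c < t < d -> locally t (fun u => g u = g (clamp c d u))).
  { intros t Ht. eapply filter_imp; [|apply (locally_open_int c d t Ht)].
    intros u Hu. rewrite clamp_id; auto; lra. }
  split. { intros t; apply cont_Re, Hgc. }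
  split. { intros t; apply cont_Im, Hgc. }
  split. { intros t; apply cont_Re, Hdgc. }
  split. { intros t; apply cont_Im, Hdgc. }
  split.
  { intros t Ht. assert (Hdt := Hd t ltac:(lra)).
    split. { rewrite clamp_id; auto; lra. }
    split. { rewrite clamp_id; auto; lra. }
    split.
    { rewrite clamp_id by lra. unfold Cderive.
      f_equal; apply is_derive_unique; [apply Re_derive|apply Im_derive]; exact Hdt. }
    split.
    { rewrite (clamp_id c d t) by lra.
      apply (is_derive_ext_loc (fun u => Re (g u))).
      + eapply filter_imp; [|apply (Hloc t Ht)]. intros u Hu. simpl. rewrite <- Hu. reflexivity.
      + apply Re_derive, Hdt. }
    { rewrite (clamp_id c d t) by lra.
      apply (is_derive_ext_loc (fun u => Im (g u))).
      + eapply filter_imp; [|apply (Hloc t Ht)]. intros u Hu. simpl. rewrite <- Hu. reflexivity.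
      + apply Im_derive, Hdt. } }
  rewrite !clamp_id; auto; lra.
Qed.

Lemma cR_pow2 (f : R -> R) x : continuous f x -> continuous (fun t => f t ^ 2) x.
Proof. intros H. apply (continuous_ext (fun t => f t * f t)). intros; simpl; ring. apply cR_mult; auto. Qed.

Ltac cont2 := repeat match goal with
  | |- continuous (fun t => _ + _) _ => apply cR_plus
  | |- continuous (fun t => _ - _) _ => apply cR_minus
  | |- continuous (fun t => _ * _) _ => apply cR_mult
  | |- continuous (fun t => - _) _ => apply cR_opp
  | |- continuous (fun t => _ / 2) _ => apply cR_div2
  | |- continuous (fun t => _ ^ 2) _ => apply cR_pow2
  | |- continuous (fun t => sin _) _ => apply continuous_sin_comp
  | |- continuous (fun t => cos _) _ => apply continuous_cos_comp
  | |- continuous (fun t => exp _) _ => apply continuous_exp_comp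
  | |- continuous (fun t => sqrt _) _ => apply continuous_sqrt_comp
  | |- continuous (fun t => ?c) _ => apply cR_const
  | H : forall t, continuous ?f t |- continuous ?f _ => apply H
  | H : forall t, continuous ?f t |- continuous (fun t => ?f t) _ => apply H
  end.

Definition phiR eps g t := Re (f_eps eps (g t) * Cderive g t).
Definition phiI eps g t := Im (f_eps eps (g t) * Cderive g t).
Definition uR eps (g : R -> C) t := eps * Re (g t) + sin (Re (g t)) * ch (Im (g t)).
Definition uI eps (g : R -> C) t := eps * Im (g t) + cos (Re (g t)) * sh (Im (g t)).
Definition Qint eps g t := Cmod (f_eps eps (g t)) * Cmod (Cderive g t).

Lemma f_eps_eq eps z : f_eps eps z = (eps + cos (Re z) * ch (Im z), - (sin (Re z) * sh (Im z))).
Proof. unfold f_eps. rewrite Ccos_eq. unfold Cplus, RtoC. simpl. f_equal. ring. Qed.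

Lemma Re_fw eps z w : Re (f_eps eps z * w) =
  (eps + cos (Re z) * ch (Im z)) * Re w + sin (Re z) * sh (Im z) * Im w.
Proof. rewrite f_eps_eq. unfold Cmult, Re, Im. simpl. ring. Qed.

Lemma Im_fw eps z w : Im (f_eps eps z * w) =
  (eps + cos (Re z) * ch (Im z)) * Im w - sin (Re z) * sh (Im z) * Re w.
Proof. rewrite f_eps_eq. unfold Cmult, Re, Im. simpl. ring. Qed.

Lemma Q_eq eps z w : Cmod (f_eps eps z) * Cmod w =
  sqrt ((eps + cos (Re z) * ch (Im z)) ^ 2 + (sin (Re z) * sh (Im z)) ^ 2) * sqrt (Re w ^ 2 + Im w ^ 2).
Proof. rewrite f_eps_eq. unfold Cmod. simpl. f_equal. f_equal. ring. Qed.

Definition Pprop eps g c d :=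
  ex_RInt (phiR eps g) c d /\ RInt (phiR eps g) c d = uR eps g d - uR eps g c /\
  ex_RInt (phiI eps g) c d /\ RInt (phiI eps g) c d = uI eps g d - uI eps g c /\
  ex_RInt (fun t => Rabs (phiR eps g t)) c d /\ ex_RInt (Qint eps g) c d.

Lemma P_refl eps g c : Pprop eps g c c.
Proof.
  unfold Pprop. rewrite !(RInt_point (V := R_CompleteNormedModule)). unfold zero; simpl.
  split. apply ex_RInt_point. split. ring. split. apply ex_RInt_point. split. ring.
  split; apply ex_RInt_point.
Qed.

Lemma R_chasles (f : R -> R) a b c : ex_RInt f a b -> ex_RInt f b c ->
  RInt f a c = RInt f a b + RInt f b c.
Proof. intros H1 H2. rewrite <- (RInt_Chasles (V := R_CompleteNormedModule) f a b c H1 H2). reflexivity. Qed.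

Lemma P_trans eps g c d e : Pprop eps g c d -> Pprop eps g d e -> Pprop eps g c e.
Proof.
  intros [A1 [A2 [A3 [A4 [A5 A6]]]]] [B1 [B2 [B3 [B4 [B5 B6]]]]].
  split. { eapply ex_RInt_Chasles; eauto. }
  split. { rewrite (R_chasles _ c d e) by auto. rewrite A2, B2. lra. }
  split. { eapply ex_RInt_Chasles; eauto. }
  split. { rewrite (R_chasles _ c d e) by auto. rewrite A4, B4. lra. }
  split; eapply ex_RInt_Chasles; eauto.
Qed.

Lemma ch_deriv y : is_derive ch y (sh y).
Proof. unfold ch, sh. auto_derive; auto. simpl. unfold Rdiv. ring. Qed.
Lemma sh_deriv y : is_derive sh y (ch y).
Proof. unfold ch, sh. auto_derive; auto. simpl. unfold Rdiv. ring. Qed.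

Lemma piece_P eps g a b c d : continuous_on_01 g -> C1_on g a b -> a <= c -> c <= d -> d <= b ->
  0 <= c -> d <= 1 -> Pprop eps g c d.
Proof.
  intros Hg HC1 H1 H2 H3 H4 H5.
  destruct (Req_dec c d) as [<-|Hne]; [apply P_refl|].
  destruct (piece_rep g a b c d Hg HC1 H1 ltac:(lra) H3 H4 H5)
    as [X [Y [DX [DY [cX [cY [cDX [cDY [Hr [Xc [Xd [Yc Yd]]]]]]]]]]]].
  assert (Hm : Rmin c d = c) by (apply Rmin_left; lra).
  assert (HM : Rmax c d = d) by (apply Rmax_right; lra).
  set (psiR := fun t => (eps + cos (X t) * ch (Y t)) * DX t + sin (X t) * sh (Y t) * DY t).
  set (psiI := fun t => (eps + cos (X t) * ch (Y t)) * DY t - sin (X t) * sh (Y t) * DX t).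
  set (psiQ := fun t => sqrt ((eps + cos (X t) * ch (Y t)) ^ 2 + (sin (X t) * sh (Y t)) ^ 2) *
                        sqrt (DX t ^ 2 + DY t ^ 2)).
  assert (EqR : forall t, Rmin c d < t < Rmax c d -> psiR t = phiR eps g t).
  { intros t Ht. rewrite Hm, HM in Ht. destruct (Hr t Ht) as [E1 [E2 [E3 _]]].
    unfold phiR, psiR. rewrite Re_fw, E1, E2, E3. reflexivity. }
  assert (EqI : forall t, Rmin c d < t < Rmax c d -> psiI t = phiI eps g t).
  { intros t Ht. rewrite Hm, HM in Ht. destruct (Hr t Ht) as [E1 [E2 [E3 _]]].
    unfold phiI, psiI. rewrite Im_fw, E1, E2, E3. reflexivity. }
  assert (EqA : forall t, Rmin c d < t < Rmax c d -> Rabs (psiR t) = Rabs (phiR eps g t)).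
  { intros t Ht. rewrite EqR; auto. }
  assert (EqQ : forall t, Rmin c d < t < Rmax c d -> psiQ t = Qint eps g t).
  { intros t Ht. rewrite Hm, HM in Ht. destruct (Hr t Ht) as [E1 [E2 [E3 _]]].
    unfold Qint, psiQ. rewrite Q_eq, E1, E2, E3. reflexivity. }
  assert (cR : forall t, continuous psiR t) by (intros t; unfold psiR, ch, sh; cont2).
  assert (cI : forall t, continuous psiI t) by (intros t; unfold psiI, ch, sh; cont2).
  assert (cQ : forall t, continuous psiQ t) by (intros t; unfold psiQ, ch, sh; cont2).
  assert (cA : forall t, continuous (fun t => Rabs (psiR t)) t).
  { intros t. apply (continuous_comp psiR Rabs). apply cR. apply continuous_Rabs. }
  assert (EX : forall f : R -> R, (forall t, continuous f t) -> ex_RInt f c d).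
  { intros f Hf. apply (ex_RInt_continuous (V := R_CompleteNormedModule)). intros; apply Hf. }
  split. { apply (ex_RInt_ext psiR); auto. }
  split.
  { rewrite <- (RInt_ext psiR) by auto.
    rewrite (ftc (fun t => eps * X t + sin (X t) * ch (Y t)) psiR c d);
      [ | lra | intros t; unfold ch; cont2 | exact cR | ].
    { unfold uR. rewrite Xc, Xd, Yc, Yd. reflexivity. }
    intros t Ht. destruct (Hr t Ht) as [_ [_ [_ [DXh DYh]]]].
    unfold ch. auto_derive.
    { repeat split; eexists; eauto. }
    replace (Derive (fun x => X x) t) with (DX t) by (symmetry; apply is_derive_unique; exact DXh).
    replace (Derive (fun x => Y x) t) with (DY t) by (symmetry; apply is_derive_unique; exact DYh).
    unfold psiR, ch, sh. unfold Rdiv. ring. }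
  split. { apply (ex_RInt_ext psiI); auto. }
  split.
  { rewrite <- (RInt_ext psiI) by auto.
    rewrite (ftc (fun t => eps * Y t + cos (X t) * sh (Y t)) psiI c d);
      [ | lra | intros t; unfold sh; cont2 | exact cI | ].
    { unfold uI. rewrite Xc, Xd, Yc, Yd. reflexivity. }
    intros t Ht. destruct (Hr t Ht) as [_ [_ [_ [DXh DYh]]]].
    unfold sh. auto_derive.
    { repeat split; eexists; eauto. }
    replace (Derive (fun x => X x) t) with (DX t) by (symmetry; apply is_derive_unique; exact DXh).
    replace (Derive (fun x => Y x) t) with (DY t) by (symmetry; apply is_derive_unique; exact DYh).
    unfold psiI, ch, sh. unfold Rdiv. ring. }
  split. { apply (ex_RInt_ext (fun t => Rabs (psiR t))); auto. }
  apply (ex_RInt_ext psiQ); auto.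
Qed.

Lemma adm_P eps g : piecewise_C1 g -> forall c d, 0 <= c -> c <= d -> d <= 1 -> Pprop eps g c d.
Proof.
  intros [Hg [l [Hsi Hp]]] c d H1 H2 H3.
  assert (Hlast : last (0 :: l ++ (1 :: nil)) 0 = 1).
  { change (0 :: l ++ (1 :: nil)) with ((0 :: l) ++ (1 :: nil)). apply last_last. }
  apply (partition_ind (Pprop eps g) (P_refl eps g) (fun c d e _ _ => P_trans eps g c d e)
           0 1 (l ++ (1 :: nil)) 0); try lra; auto; try (rewrite Hlast; lra).
  intros p Hin c' d' K1 K2 K3 K4 K5.
  apply (piece_P eps g (fst p) (snd p)); auto.
Qed.

Definition sq01 := (fun q : R * R => unit_int (fst q) /\ unit_int (snd q)).

Lemma slice_cont (H : R * R -> C) t : unit_int t ->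
  (forall p : R * R, unit_int (fst p) -> unit_int (snd p) ->
     filterlim H (within sq01 (locally p)) (locally (H p))) ->
  forall s, 0 <= s <= 1 ->
  filterlim (fun s => H (s, t)) (within (fun u => 0 <= u <= 1) (locally s)) (locally (H (s, t))).
Proof.
  intros Ht HH s Hs.
  eapply filterlim_comp; [| apply (HH (s, t)); simpl; unfold unit_int; auto].
  intros P [e He]. unfold filtermap, within. exists e. intros y Hy Hy01.
  apply He.
  - split; simpl; [exact Hy | apply ball_center].
  - split; simpl; unfold unit_int; auto.
Qed.

Lemma closed_one g : admissible_contour g -> Re (g 1) = Re (g 0) + 2 * PI /\ Im (g 1) = Im (g 0).
Proof.
  intros [Hpw [[k0 Hk0] [H [Hc [H0 [H1 Hcl]]]]]].
  assert (E1 := f_equal fst Hk0). assert (E2 := f_equal snd Hk0). simpl in E1, E2.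
  split; [|unfold Im; lra].
  assert (HPI := PI_RGT_0).
  assert (Hs : forall t, unit_int t -> forall s, continuous (fun s => H (clamp 0 1 s, t)) s).
  { intros t Ht. apply (cont_clamp (fun s => H (s, t))); [lra|].
    intros s Hs. apply slice_cont; auto. }
  set (kap := fun s => Re (H (clamp 0 1 s, 1)) - Re (H (clamp 0 1 s, 0))).
  assert (Hkc : continuity kap).
  { intros x. apply continuity_pt_filterlim.
    apply (continuous_minus (fun s => Re (H (clamp 0 1 s, 1))) (fun s => Re (H (clamp 0 1 s, 0))));
    apply cont_Re; apply Hs; unfold unit_int; lra. }
  assert (U01 : unit_int 0 /\ unit_int 1) by (unfold unit_int; lra).
  assert (K0 : kap 0 = 2 * PI * IZR k0).
  { unfold kap. rewrite !clamp_id by lra. rewrite !H0 by tauto. unfold Re. lra. }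
  assert (K1 : kap 1 = 2 * PI).
  { unfold kap. rewrite !clamp_id by lra. rewrite !H1 by tauto. unfold real_circle, RtoC, Re. simpl. ring. }
  assert (Kint : forall s, 0 <= s <= 1 -> exists k, kap s = 2 * PI * IZR k).
  { intros s Hs01. destruct (Hcl s Hs01) as [k Hk]. exists k.
    assert (E := f_equal fst Hk). simpl in E. unfold kap. rewrite clamp_id by lra. unfold Re. lra. }
  destruct (Z.eq_dec k0 1) as [->|Hne].
  { unfold Re. lra. }
  exfalso.
  assert (Hhalf : forall k k' : Z, IZR k = IZR k' + 1/2 \/ IZR k = IZR k' - 1/2 -> False).
  { intros k k' [Hk|Hk].
    - assert (IZR (2 * k - 2 * k') = 1) by (rewrite minus_IZR, !mult_IZR; lra).
      apply eq_IZR in H2. lia.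
    - assert (IZR (2 * k - 2 * k') = -1) by (rewrite minus_IZR, !mult_IZR; lra).
      apply eq_IZR in H2. lia. }
  destruct (Z.lt_ge_cases k0 1) as [Hlt|Hge].
  - assert (Hk0' : IZR k0 <= 0) by (apply IZR_le; lia).
    destruct (IVT_gen kap 0 1 (2 * PI * (IZR k0 + 1/2)) Hkc) as [x [Hx Hkx]].
    { rewrite K0, K1. rewrite Rmin_left by nra. rewrite Rmax_right by nra. split; nra. }
    rewrite Rmin_left in Hx by lra. rewrite Rmax_right in Hx by lra.
    destruct (Kint x Hx) as [k Hk]. apply (Hhalf k k0). left. nra.
  - assert (Hk0' : 2 <= IZR k0) by (apply IZR_le; lia).
    destruct (IVT_gen kap 0 1 (2 * PI * (IZR k0 - 1/2)) Hkc) as [x [Hx Hkx]].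
    { rewrite K0, K1. rewrite Rmin_right by nra. rewrite Rmax_left by nra. split; nra. }
    rewrite Rmin_left in Hx by lra. rewrite Rmax_right in Hx by lra.
    destruct (Kint x Hx) as [k Hk]. apply (Hhalf k k0). right. nra.
Qed.

Lemma ch_ge1 y : 1 <= ch y.
Proof.
  unfold ch. rewrite exp_Ropp. assert (Ha := exp_pos y). set (a := exp y) in *.
  assert (0 < / a) by (apply Rinv_0_lt_compat; lra).
  assert (H1 : 0 <= (a - 1) ^ 2 * / a) by (apply Rmult_le_pos; [apply pow2_ge_0 | lra]).
  assert (H2 : (a - 1) ^ 2 * / a = a - 2 + / a) by (field; lra).
  lra.
Qed.

Lemma part1 eps g : admissible_contour g -> Z_gamma eps g = RtoC (2 * PI * eps).
Proof.
  intros Hadm. assert (Hc := closed_one g Hadm). destruct Hc as [Hx Hy].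
  destruct Hadm as [Hpw _].
  destruct (adm_P eps g Hpw 0 1 ltac:(lra) ltac:(lra) ltac:(lra)) as [A1 [A2 [A3 [A4 _]]]].
  assert (ER : uR eps g 1 - uR eps g 0 = 2 * PI * eps).
  { unfold uR. rewrite Hx, Hy. rewrite sin_plus, sin_2PI, cos_2PI. ring. }
  assert (EI : uI eps g 1 - uI eps g 0 = 0).
  { unfold uI. rewrite Hx, Hy. rewrite cos_plus, sin_2PI, cos_2PI. ring. }
  unfold Z_gamma. apply (is_RInt_unique (V := C_R_CompleteNormedModule)). unfold RtoC.
  apply (is_RInt_fct_extend_pair (U := R_NormedModule) (V := R_NormedModule)).
  - assert (HR := RInt_correct (V := R_CompleteNormedModule) _ _ _ A1).
    rewrite A2, ER in HR. exact HR.
  - assert (HI := RInt_correct (V := R_CompleteNormedModule) _ _ _ A3).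
    rewrite A4, EI in HI. exact HI.
Qed.

Lemma ZQ_ge4 eps g : admissible_contour g -> 4 <= ZQ_gamma eps g.
Proof.
  intros Hadm. assert (Hc := closed_one g Hadm). destruct Hc as [Hx Hy].
  destruct Hadm as [Hpw _]. assert (Hg := proj1 Hpw).
  assert (HPI := PI_RGT_0).
  set (x0 := Re (g 0)) in *.
  set (r := (x0 - PI / 2) / PI).
  assert (Hr : r * PI = x0 - PI / 2) by (unfold r; field; lra).
  destruct (archimed r) as [Ar1 Ar2].
  set (m := up r) in *.
  set (L := PI / 2 + IZR m * PI).
  assert (HL1 : x0 < L) by (unfold L; nra).
  assert (HL2 : L <= x0 + PI) by (unfold L; nra).
  set (xh := fun t => Re (g (clamp 0 1 t))).
  assert (Hxh : continuity xh).
  { intros t. apply continuity_pt_filterlim. apply cont_Re.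
    apply (cont_clamp g 0 1); [lra|]. intros s Hs. apply Hg. exact Hs. }
  assert (X0 : xh 0 = x0) by (unfold xh; rewrite clamp_id by lra; reflexivity).
  assert (X1 : xh 1 = x0 + 2 * PI) by (unfold xh; rewrite clamp_id by lra; exact Hx).
  destruct (IVT_gen xh 0 1 L Hxh) as [t1 [Ht1 E1]].
  { rewrite X0, X1, Rmin_left, Rmax_right; lra. }
  rewrite Rmin_left in Ht1 by lra. rewrite Rmax_right in Ht1 by lra.
  destruct (IVT_gen xh t1 1 (L + PI) Hxh) as [t2 [Ht2 E2]].
  { rewrite E1, X1, Rmin_left, Rmax_right; lra. }
  rewrite Rmin_left in Ht2 by lra. rewrite Rmax_right in Ht2 by lra.
  unfold xh in E1, E2. rewrite clamp_id in E1, E2 by lra.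
  destruct (adm_P eps g Hpw 0 t1 ltac:(lra) ltac:(lra) ltac:(lra)) as [_ [P1 [_ [_ [Q1 _]]]]].
  destruct (adm_P eps g Hpw t1 t2 ltac:(lra) ltac:(lra) ltac:(lra)) as [_ [P2 [_ [_ [Q2 _]]]]].
  destruct (adm_P eps g Hpw t2 1 ltac:(lra) ltac:(lra) ltac:(lra)) as [_ [P3 [_ [_ [Q3 _]]]]].
  destruct (adm_P eps g Hpw 0 1 ltac:(lra) ltac:(lra) ltac:(lra)) as [R1 [_ [_ [_ [Q4 Q5]]]]].
  destruct (adm_P eps g Hpw 0 t1 ltac:(lra) ltac:(lra) ltac:(lra)) as [S1 _].
  destruct (adm_P eps g Hpw t1 t2 ltac:(lra) ltac:(lra) ltac:(lra)) as [S2 _].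
  destruct (adm_P eps g Hpw t2 1 ltac:(lra) ltac:(lra) ltac:(lra)) as [S3 _].
  assert (Hle : RInt (fun t => Rabs (phiR eps g t)) 0 1 <= ZQ_gamma eps g).
  { unfold ZQ_gamma. apply RInt_le; auto; try lra.
    intros t _. unfold phiR. rewrite <- Cmod_mult. apply re_le_Cmod. }
  rewrite (R_chasles _ 0 t1 1) in Hle by (auto; eapply ex_RInt_Chasles; eauto).
  rewrite (R_chasles _ t1 t2 1) in Hle by auto.
  assert (I1 := abs_RInt_le (phiR eps g) 0 t1 ltac:(lra) S1).
  assert (I2 := abs_RInt_le (phiR eps g) t1 t2 ltac:(lra) S2).
  assert (I3 := abs_RInt_le (phiR eps g) t2 1 ltac:(lra) S3).
  rewrite P1 in I1. rewrite P2 in I2. rewrite P3 in I3.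
  assert (Hs : sin L = 1 \/ sin L = -1).
  { assert (Hcos : cos L = 0).
    { unfold L. rewrite cos_plus, cos_PI2, sin_PI2, sin_eq_0_1 by (exists m; reflexivity). ring. }
    assert (HH := sin2_cos2 L). rewrite Hcos in HH. unfold Rsqr in HH.
    assert ((sin L - 1) * (sin L + 1) = 0) by nra.
    apply Rmult_integral in H. lra. }
  assert (C1 := ch_ge1 (Im (g t1))). assert (C2 := ch_ge1 (Im (g t2))).
  unfold uR in I1, I2, I3. rewrite E1, E2, Hx, Hy in *. rewrite neg_sin in I2, I3.
  rewrite sin_plus, sin_2PI, cos_2PI in I3.
  unfold x0 in *.
  assert (HZ := Hle).
  match type of I1 with Rabs ?e <= _ => assert (F1 := Rle_abs e); assert (F1' := Rle_abs (- e)) end.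
  match type of I2 with Rabs ?e <= _ => assert (F2 := Rle_abs e); assert (F2' := Rle_abs (- e)) end.
  match type of I3 with Rabs ?e <= _ => assert (F3 := Rle_abs e); assert (F3' := Rle_abs (- e)) end.
  rewrite Rabs_Ropp in F1', F2', F3'.
  destruct Hs as [Hs|Hs]; rewrite Hs in *; lra.
Qed.

Theorem mainTheorem1 :
  (forall (eps : R) (g : R -> C), 0 < eps -> admissible_contour g ->
     Z_gamma eps g = RtoC (2 * PI * eps)) /\
  (exists (K eps0 : R), 0 < eps0 /\
     forall (eps : R), 0 < eps < eps0 ->
     forall g : R -> C, admissible_contour g ->
       Re (avg_sign eps g) <= PI / 2 * eps + K * eps ^ 2).
Proof.
  split.
  - intros eps g _ Hadm. apply part1; auto.
  - exists 0, 1. split; [lra|]. intros eps Heps g Hadm.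
    assert (HQ := ZQ_ge4 eps g Hadm).
    assert (HPI := PI_RGT_0).
    unfold avg_sign. rewrite part1 by auto.
    set (q := ZQ_gamma eps g) in *.
    assert (E : Re (RtoC (2 * PI * eps) / RtoC q) = 2 * PI * eps / q).
    { unfold Cdiv, Cmult, Cinv, RtoC, Re. simpl. field. lra. }
    rewrite E. unfold Rdiv.
    assert (/ q <= / 4) by (apply Rinv_le_contravar; lra).
    assert (0 < / q) by (apply Rinv_0_lt_compat; lra).
    assert (2 * PI * eps * / q <= 2 * PI * eps * / 4) by (apply Rmult_le_compat_l; nra).
    assert (PI * / 2 * eps + 0 * eps ^ 2 = 2 * PI * eps * / 4) by field.
    lra.
Qed.
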